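(* For any input distribution $\mathcal{D}$, and any $n,k\ge1$, $p\in[0,1]$, there is a deterministic selection algorithm in the rank query model that runs in $k$ rounds, has success probability at least $p$, and issues at most $np\bigl(1-\frac{k-1}{2k}p\bigr)+1$ queries in expectation when the input is drawn from $\mathcal{D}$.
   Context: Selection with rank queries: there is a vector $\vec{x}=(x_1,\ldots,x_n)$ whose ranks form a permutation of $\{1,\ldots,n\}$; a rank $r\in\{1,\ldots,n\}$ is given and the goal is to output the index $i$ with $\mathrm{rank}(x_i)=r$. Queries have the form ''How is $\mathrm{rank}(x_j)$ compared to $m$?'', with answer ''$<$'', ''$=$'' or ''$>$''. An algorithm runs in $k$ rounds if in each of $k$ rounds it submits a set of queries chosen depending only on answers of earlier rounds, then receives all answers. An input distribution is a probability distribution over rank permutations (with $r$ given); the algorithm may depend on $\mathcal{D}$. *)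

(* Defs.v *)
From HB Require Import structures.
From mathcomp Require Import all_boot all_order all_algebra all_fingroup.
From mathcomp Require Import reals.
Set Implicit Arguments. Unset Strict Implicit. Unset Printing Implicit Defensive.
Import Order.TTheory GRing.Theory Num.Theory.

(* An input is a rank permutation s : 'S_n ; element x_j (j : 'I_n) has
   rank (s j).+1 \in {1,...,n}. *)

Inductive answer := ALt | AEq | AGt.

(* A query "how is rank(x_j) compared to m?" is the pair (j, m). *)
Definition query (n : nat) := ('I_n * nat)%type.

Definition answer_of (n : nat) (s : 'S_n) (q : query n) : answer :=
  let r := (s q.1).+1 in
  if r < q.2 then ALt else if r == q.2 then AEq else AGt.

(* A transcript: the list of completed rounds, each round being the list
   of (query, answer) pairs of that round. *)
Definition transcript (n : nat) := seq (seq (query n * answer)).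

(* A deterministic multi-round algorithm: the set (list) of queries of the
   next round is a function of the transcript of earlier rounds; the final
   output index is a function of the whole transcript. *)
Record algorithm (n : nat) := Algorithm {
  next_queries : transcript n -> seq (query n);
  output : transcript n -> 'I_n }.

Fixpoint run_rounds (n : nat) (A : algorithm n) (s : 'S_n) (t : nat)
  : transcript n :=
  match t with
  | 0 => [::]
  | t'.+1 =>
      let h := run_rounds A s t' in
      rcons h [seq (q, answer_of s q) | q <- next_queries A h]
  end.

Definition alg_output (n : nat) (A : algorithm n) (k : nat) (s : 'S_n) : 'I_n :=
  output A (run_rounds A s k).

Definition num_queries (n : nat) (A : algorithm n) (k : nat) (s : 'S_n) : nat :=
  sumn [seq size rd | rd <- run_rounds A s k].

(* Success on input s for target rank r (1-indexed). *)
Definition succeeds (n : nat) (A : algorithm n) (k r : nat) (s : 'S_n) : bool :=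
  (s (alg_output A k s)).+1 == r.

Definition is_distribution (R : realType) (n : nat) (D : {ffun 'S_n -> R}) :=
  (forall s, 0 <= D s)%R /\ (\sum_(s : 'S_n) D s = 1)%R.

Definition success_prob (R : realType) (n : nat) (D : {ffun 'S_n -> R})
  (A : algorithm n) (k r : nat) : R :=
  (\sum_(s : 'S_n) D s * (succeeds A k r s)%:R)%R.

Definition expected_queries (R : realType) (n : nat) (D : {ffun 'S_n -> R})
  (A : algorithm n) (k : nat) : R :=
  (\sum_(s : 'S_n) D s * (num_queries A k s)%:R)%R.

(* Main.v *)
Require Import Defs.
From HB Require Import structures.
From mathcomp Require Import all_boot all_order all_algebra all_fingroup.
From mathcomp Require Import reals.
From mathcomp Require Import zify ring lra.
Import Order.TTheory GRing.Theory Num.Theory.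
Set Implicit Arguments. Unset Strict Implicit. Unset Printing Implicit Defensive.

Lemma sum_div (c m : nat) : 0 < c ->
  (2 * \sum_(i < m) (i %/ c * c) + m * c.-1 = m * m.-1 + (m %% c) * (c - m %% c))%N.
Proof.
move=> c0; elim: m => [|m IH]; first by rewrite big_ord0 mod0n.
rewrite big_ord_recr /= modnS.
have em := divn_eq m c. have lm := ltn_pmod m c0.
case: ifP => dv.
- have : c %| (m %% c).+1.
    by rewrite -(dvdn_addr _ (dvdn_mull (m %/ c) (dvdnn c))) addnS -em.
  move=> /(dvdn_leq (ltn0Sn _)) hc.
  move: IH em lm hc.
  move: (m %/ c) (m %% c) (\sum_(i < m) _) => q r S IH em lm hc.
  have ec : c = r.+1 by lia.
  subst c m. clear dv lm hc c0.
  rewrite subSnn muln1 /= !mul0n !addn0 in IH *.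
  move: IH; case: q => [|q]; case: r => [|r] /=; timeout 30 lia.
- have lt : (m %% c).+1 < c.
    rewrite ltn_neqAle lm andbT; apply/negP => /eqP E.
    by move: dv; rewrite em -addnS E dvdn_addl ?dvdnn // dvdn_mull.
  move: IH em lt.
  move: (m %/ c) (m %% c) (\sum_(i < m) _) => q r S IH em lt.
  subst m. clear dv lm c0.
  have [d ec] : exists d, c = r + d.+2 by exists (c - r.+2); lia.
  subst c. clear lt.
  have e1 : (r + d.+2 - r = d.+2)%N by lia.
  have e2 : (r + d.+2 - r.+1 = d.+1)%N by lia.
  rewrite e1 in IH; rewrite e2. clear e1 e2.
  rewrite addnS /= in IH *.
  move: IH; case: q => [|q]; case: r => [|r] /=; timeout 30 lia.
Qed.

Definition isEq (a : answer) : bool := if a is AEq then true else false.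

Definition found n (h : transcript n) : bool :=
  has (fun qa : query n * answer => isEq qa.2) (flatten h).

Definition the_alg n (idx : nat -> 'I_n) (m c r : nat) : algorithm n :=
  Algorithm
    (fun h : transcript n => if found h then [::]
       else map (fun i => (idx i, r)) (filter (fun i => i %/ c == size h) (iota 0 m)))
    (fun h : transcript n =>
       if map (fun qa : query n * answer => qa.1.1)
            (filter (fun qa : query n * answer => isEq qa.2) (flatten h)) is j :: _
       then j else idx m).

Lemma isEq_answer n (s : 'S_n) j r : isEq (answer_of s (j, r)) = ((s j).+1 == r).
Proof.
rewrite /answer_of /=.
case: ltnP => h; first by rewrite (ltn_eqF h).
by case: eqP.
Qed.

Lemma all_flat T (a : pred T) (ss : seq (seq T)) : all a (flatten ss) = all (all a) ss.
Proof. by elim: ss => //= x ss IH; rewrite all_cat IH. Qed.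

Lemma gen_count (f : nat -> nat) (Q : pred nat) (s : seq nat) k :
  (\sum_(u <- iota 0 k) count (fun i => (f i == u) && Q i) s <= count Q s)%N.
Proof.
elim: s => [|x s IH] /=; first by rewrite big1.
rewrite big_split /= leq_add //.
case: (Q x); last by rewrite big1 // => u _; rewrite andbF.
rewrite (eq_bigr (fun u => if f x == u then 1 else 0)%N); last first.
  by move=> u _; rewrite andbT; case: (f x == u).
rewrite -big_mkcond sum1_count (eq_count (a2 := pred1 (f x))); last first.
  by move=> u /=; rewrite eq_sym.
by rewrite count_uniq_mem ?iota_uniq // leq_b1.
Qed.

Section Run.
Variables (n : nat) (idx : nat -> 'I_n) (m c r : nat) (s : 'S_n) (pi : nat).
Hypothesis hP : forall i, (i < m)%N -> isEq (answer_of s (idx i, r)) = (i == pi).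

Definition cond u := (pi < m) && (pi %/ c < u).
Definition round u : seq (query n * answer) :=
  if cond u then [::]
  else map (fun i => ((idx i, r), answer_of s (idx i, r)))
         (filter (fun i => i %/ c == u) (iota 0 m)).

Lemma has_round u : has (fun qa : query n * answer => isEq qa.2) (round u)
   = ~~ cond u && ((pi < m) && (pi %/ c == u)).
Proof.
rewrite /round; case: (cond u) => //=.
rewrite has_map /preim /=.
apply/hasP/andP.
- case=> i; rewrite mem_filter mem_iota add0n => /andP [/eqP iu /= im].
  rewrite hP // => /eqP ip; subst; split=> //.
- case=> pm /eqP pu; exists pi; last by rewrite /= hP.
  by rewrite mem_filter mem_iota add0n pu eqxx.
Qed.

Lemma found_rounds t : found [seq round u | u <- iota 0 t] = cond t.
Proof.
elim: t => [|t IH]; first by rewrite /found /= /cond andbF.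
rewrite -addn1 iotaD map_cat /found flatten_cat has_cat -/(found _) IH /=.
rewrite cats0 has_round /cond add0n addn1 ltnS.
case: (pi < m) => //=.
by rewrite [X in _ = X]leq_eqVlt; case: ltngtP.
Qed.

Lemma run_eq k : run_rounds (the_alg idx m c r) s k = [seq round u | u <- iota 0 k].
Proof.
elim: k => [//|k IH].
have -> : iota 0 k.+1 = rcons (iota 0 k) k by rewrite -cats1 -addn1 iotaD.
rewrite map_rcons /= IH; congr rcons.
rewrite found_rounds size_map size_iota /round.
case: (cond k) => //.
by rewrite -map_comp.
Qed.

Lemma num_le k :
  (num_queries (the_alg idx m c r) k s <= count (fun i => i %/ c * c <= pi) (iota 0 m))%N.
Proof.
rewrite /num_queries run_eq -map_comp sumnE big_map.
apply: leq_trans (gen_count (fun i => i %/ c) _ _ k).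
apply: leq_sum => u _ /=; rewrite /round; case: ifP => cu //=.
rewrite size_map size_filter; apply/eq_leq/eq_in_count => i.
rewrite mem_iota add0n => /andP [_ im] /=.
case: eqP => //= iu; symmetry; subst u.
move: cu; rewrite /cond; have [pm|pm] := leqP m pi.
  by move=> _; apply: leq_trans (leq_divM i c) _; lia.
move=> /= /negbT; rewrite -leqNgt => h.
by apply: leq_trans (leq_divM pi c); rewrite leq_mul2r h orbT.
Qed.

Lemma succ_ok k : (0 < c)%N -> (m <= k * c)%N -> (s (idx pi)).+1 = r -> (pi <= m)%N ->
  succeeds (the_alg idx m c r) k r s.
Proof.
move=> c0 mkc spi pim.
rewrite /succeeds /alg_output run_eq /=.
set L := flatten _.
have allgood : all (fun qa : query n * answer => isEq qa.2 ==> ((s qa.1.1).+1 == r)) L.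
  rewrite all_flat all_map; apply/allP => u _ /=; rewrite /round; case: (cond u) => //.
  by rewrite all_map; apply/allP => i _ /=; rewrite isEq_answer; apply/implyP.
have fk := found_rounds k.
case E: (filter _ L) => [|qa L'] /=.
- have : found [seq round u | u <- iota 0 k] = false.
    by rewrite /found -/L -size_filter_gt0 E.
  rewrite fk /cond => nf.
  have [pm|pm] := ltnP pi m.
    by move: nf; rewrite pm /= ltn_divLR // (leq_trans pm mkc).
  have -> : m = pi by lia.
  by rewrite spi.
- have : all (fun qa : query n * answer => isEq qa.2 ==> ((s qa.1.1).+1 == r)) (qa :: L').
    by rewrite -E all_filter; apply: sub_all allgood => x /=; case: (isEq x.2).
  have : all (fun qa : query n * answer => isEq qa.2) (qa :: L') by rewrite -E filter_all.
  by move=> /= /andP [-> _] /andP [].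
Qed.

End Run.

Local Open Scope ring_scope.

Lemma prefix_avg (R : realFieldType) (a : nat -> R) (n : nat) :
  (forall t u, (t <= u)%N -> (u < n)%N -> a u <= a t) ->
  forall b, (b <= n)%N -> b%:R * \sum_(t < n) a t <= n%:R * \sum_(t < b) a t.
Proof.
move=> dec b bn.
suff H : forall d, (b + d <= n)%N ->
   b%:R * \sum_(t < b + d) a t <= (b + d)%:R * \sum_(t < b) a t.
  by have := H (n - b)%N; rewrite subnKC //; apply.
elim=> [|d IH] hd; first by rewrite addn0.
rewrite addnS big_ord_recr /= mulrDr.
have h1 : b%:R * a (b + d)%N <= \sum_(t < b) a t.
  have -> : b%:R * a (b + d)%N = \sum_(t < b) a (b + d)%N.
    by rewrite sumr_const card_ord mulr_natl.
  apply: ler_sum => t _; apply: dec; last by lia.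
  have := ltn_ord t; lia.
have := IH ltac:(lia).
rewrite -addn1 natrD mulrDl ?mul1r. lra.
Qed.

Lemma final_ineq (R : realFieldType) (n k m S : nat) (p : R) :
  (1 <= n)%N -> (1 <= k)%N -> (m <= n)%N -> m%:R <= n%:R * p -> 0 <= p -> p <= 1 ->
  (k * m * m.-1 <= 2 * k * S + m * m.-1)%N ->
  m%:R - S%:R / n%:R <= n%:R * p * (1 - (k%:R - 1) / (2 * k%:R) * p) + 1.
Proof.
move=> n1 k1 mn Mx p0 p1 hS.
have N0 : 0 < n%:R :> R by rewrite ltr0n.
have K1 : 1 <= k%:R :> R by rewrite ler1n.
have K0 : 0 < k%:R :> R by lra.
have MN : m%:R <= n%:R :> R by rewrite ler_nat.
have S0 : 0 <= S%:R :> R by [].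
have hS' : (k%:R - 1) * m%:R * (m%:R - 1) <= 2 * k%:R * S%:R :> R.
  case: m hS {mn Mx MN} => [|m] hS; first by rewrite mulr0 mul0r; nra.
  have : (k * m.+1 * m <= 2 * k * S + m.+1 * m)%N by [].
  rewrite -(ler_nat R) !natrD !natrM -[m.+1]addn1 natrD /=. lra.
set x := n%:R * p.
have xN : x <= n%:R by rewrite /x; nra.
have x0 : 0 <= x by rewrite /x; nra.
have P : 0 < 2 * k%:R * n%:R :> R by nra.
rewrite -(ler_pM2l P).
have -> : 2 * k%:R * n%:R * (m%:R - S%:R / n%:R) = 2 * k%:R * n%:R * m%:R - 2 * k%:R * S%:R :> R.
  by field; lra.
have -> : 2 * k%:R * n%:R * (x * (1 - (k%:R - 1) / (2 * k%:R) * p) + 1)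
   = 2 * k%:R * n%:R * x - (k%:R - 1) * x * x + 2 * k%:R * n%:R :> R.
  by rewrite /x; field; lra.
have Mx2 : m%:R <= x by [].
clearbody x.
have h1 : 0 <= (x - m%:R) * (2 * k%:R * n%:R - (k%:R - 1) * (x + m%:R)).
  apply: mulr_ge0; first lra.
  have : (k%:R - 1) * (x + m%:R) <= (k%:R - 1) * (2 * n%:R) :> R.
    by apply: ler_wpM2l; lra.
  nra.
have h2 : (k%:R - 1) * m%:R <= 2 * k%:R * n%:R :> R.
  have : (k%:R - 1) * m%:R <= k%:R * n%:R :> R.
    apply: ler_pM => //; lra.
  nra.
nra.
Qed.

Lemma indic (R : realFieldType) (x b : nat) :
  \sum_(t < b) ((x == t)%:R : R) = (x < b)%:R.
Proof.
elim: b => [|b IH]; first by rewrite big_ord0 ltn0.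
rewrite big_ord_recr /= IH ltnS.
by case: ltngtP => //= _; rewrite ?addr0 ?add0r.
Qed.

Lemma count_sum (R : realFieldType) (Q : pred nat) (m : nat) :
  (count Q (iota 0 m))%:R = \sum_(i < m) ((Q i)%:R : R).
Proof.
elim: m => [|m IH]; first by rewrite big_ord0.
rewrite big_ord_recr -IH.
have -> : iota 0 m.+1 = iota 0 m ++ [:: m] by rewrite -addn1 iotaD.
by rewrite count_cat natrD /= addn0.
Qed.

Lemma choose_m (R : realType) (N : nat) (p : R) : (0 < N)%N -> 0 <= p -> p <= 1 ->
  exists m : nat, [/\ (m < N)%N, m%:R <= N%:R * p & N%:R * p <= m.+1%:R].
Proof.
move=> N0 p0 p1.
have x0 : 0 <= N%:R * p by apply: mulr_ge0.
have xN : N%:R * p <= N%:R by rewrite -{2}[N%:R]mulr1 ler_wpM2l.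
have /andP [t1 t2] := Num.Theory.truncn_itv x0.
have tN : (Num.truncn (N%:R * p) <= N)%N.
  by rewrite -(ler_nat R); apply: le_trans t1 xN.
move: tN; rewrite leq_eqVlt => /orP [/eqP E|lt].
- exists N.-1; split; first by rewrite prednK.
  + apply: le_trans _ t1; rewrite E ler_nat; lia.
  + by rewrite prednK.
- by exists (Num.truncn (N%:R * p)); split => //; apply: ltW.
Qed.

Theorem proposition9 (R : realType) (n k r : nat) (D : {ffun 'S_n -> R}) (p : R) :
  (1 <= n)%N -> (1 <= k)%N -> (1 <= r <= n)%N ->
  is_distribution D -> 0 <= p <= 1 ->
  exists A : algorithm n,
    p <= success_prob D A k r /\
    expected_queries D A k <=
      n%:R * p * (1 - (k%:R - 1) / (2 * k%:R) * p) + 1.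
Proof.
move=> n1 k1 /andP [r1 rn] [D0 D1] /andP [p0 p1].
case: n n1 rn D D0 D1 => [//|n'] _ rn D D0 D1.
have r0lt : (r.-1 < n'.+1)%N by lia.
pose r0 : 'I_n'.+1 := Ordinal r0lt.
pose q (j : 'I_n'.+1) : R := \sum_(s : 'S_n'.+1) D s * ((s^-1%g r0 == j)%:R).
pose leT := fun i j : 'I_n'.+1 => q j <= q i.
pose sl := sort leT (enum 'I_n'.+1).
have sl_size : size sl = n'.+1 by rewrite size_sort size_enum_ord.
have sl_uniq : uniq sl by rewrite sort_uniq enum_uniq.
have sl_mem : forall j, j \in sl by move=> j; rewrite mem_sort mem_enum.
pose idx i := nth ord0 sl i.
pose pi (s : 'S_n'.+1) := index (s^-1%g r0) sl.
have pi_lt : forall s, (pi s < n'.+1)%N by move=> s; rewrite -sl_size index_mem.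
have key : forall (x : 'I_n'.+1) t, (t < n'.+1)%N -> (index x sl == t) = (x == idx t).
  move=> x t tn; apply/eqP/eqP => [<-|->]; first by rewrite /idx nth_index.
  by rewrite index_uniq ?sl_size.
have hP : forall s i, (i < n'.+1)%N -> isEq (answer_of s (idx i, r)) = (i == pi s).
  move=> s i iN; rewrite isEq_answer.
  have -> : ((s (idx i)).+1 == r) = (s (idx i) == r0).
    by rewrite -val_eqE /= -(prednK r1) eqSS.
  rewrite -(inj_eq (@perm_inj _ s^-1%g)) permK.
  by rewrite /pi [RHS]eq_sym key //; apply/eqP/eqP => ->.
have spi : forall s : 'S_n'.+1, (s (idx (pi s))).+1 = r.
  by move=> s; rewrite /idx /pi nth_index // permKV /= prednK.
have [m [mN mx xm]] := choose_m (ltn0Sn n') p0 p1.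
pose c := (m.-1 %/ k).+1.
have c0 : (0 < c)%N by [].
have mkc : (m <= k * c)%N.
  have := ltn_ceil m.-1 k1; rewrite mulnC; lia.
have kc : (k * c.-1 <= m.-1)%N by rewrite /c /= mulnC leq_divM.
exists (the_alg idx m c r).
pose a t := \sum_(s : 'S_n'.+1) D s * ((pi s == t)%:R).
have Bsum : forall b, \sum_(s : 'S_n'.+1) D s * ((pi s < b)%:R) = \sum_(t < b) a t.
  move=> b; rewrite /a exchange_big /=; apply: eq_bigr => s _.
  by rewrite -mulr_sumr indic.
have dec : forall t u, (t <= u)%N -> (u < n'.+1)%N -> a u <= a t.
  move=> t u tu un.
  have ae : forall v, (v < n'.+1)%N -> a v = q (idx v).
    move=> v vn; apply: eq_bigr => s _; by rewrite key.
  rewrite !ae //; last by apply: leq_ltn_trans un.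
  have := @sorted_leq_nth _ leT _ _ ord0 sl _ t u.
  apply => //.
  - by move=> y x z; rewrite /leT => h1 h2; apply: le_trans h2 h1.
  - by move=> x; rewrite /leT.
  - by apply: sort_sorted => x y; rewrite /leT le_total.
  - by rewrite inE sl_size; apply: leq_ltn_trans un.
  - by rewrite inE sl_size.
have atot : \sum_(t < n'.+1) a t = 1.
  rewrite -Bsum -[RHS]D1; apply: eq_bigr => s _; by rewrite pi_lt mulr1.
have pref : forall b, (b <= n'.+1)%N -> b%:R <= n'.+1%:R * \sum_(t < b) a t.
  move=> b bn; have := prefix_avg dec bn; by rewrite atot mulr1.
have N0 : 0 < n'.+1%:R :> R by rewrite ltr0n.
split.
- apply: le_trans (_ : \sum_(t < m.+1) a t <= _).
    rewrite -(ler_pM2l N0); apply: le_trans xm _; exact: pref.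
  rewrite -Bsum; apply: ler_sum => s _; apply: ler_wpM2l => //.
  rewrite ler_nat; case h: (pi s < m.+1)%N => //.
  have hs := @succ_ok _ idx m c r s (pi s) (fun i im => hP s i (ltn_trans im mN))
     k c0 mkc (spi s) h.
  by rewrite lt0n hs.
- pose b i := (i %/ c * c)%N.
  apply: le_trans (_ : \sum_(i < m) (1 - \sum_(t < b i) a t) <= _).
    rewrite /expected_queries.
    apply: le_trans (_ : \sum_(s : 'S_n'.+1) D s * \sum_(i < m) ((b i <= pi s)%N%:R) <= _).
      apply: ler_sum => s _; apply: ler_wpM2l => //.
      rewrite -(count_sum R (fun i => (b i <= pi s)%N)) ler_nat; apply: num_le.
      by move=> i im; apply: hP; apply: ltn_trans mN.
    rewrite (eq_bigr (fun s => \sum_(i < m) D s * ((b i <= pi s)%N%:R))); last first.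
      by move=> s _; rewrite mulr_sumr.
    rewrite exchange_big /=; apply: ler_sum => i _.
    have -> : 1 - \sum_(t < b i) a t
       = \sum_(s : 'S_n'.+1) (D s - D s * ((pi s < b i)%N%:R)) by rewrite sumrB D1 Bsum.
    apply: ler_sum => s _.
    by rewrite leqNgt; case: (pi s < b i)%N; rewrite /= ?mulr0 ?mulr1 ?subr0 ?subrr.
  have bi : forall i : 'I_m, 1 - \sum_(t < b i) a t <= 1 - (b i)%:R / n'.+1%:R.
    move=> i; rewrite lerD2l lerN2 ler_pdivrMr // mulrC; apply: pref.
    have := leq_divM i c; have := ltn_ord i; rewrite /b; lia.
  apply: le_trans (ler_sum _ (fun i _ => bi i)) _.
  rewrite sumrB sumr_const card_ord -mulr_suml -natr_sum.
  apply: final_ineq => //; first by apply: ltnW.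
  have sd := sum_div m c0.
  rewrite -/b in sd.
  move: (\sum_(i < m) b i)%N sd => S sd.
  have h1 : (k * (m * m.-1) <= k * (2 * S + m * c.-1))%N.
    by rewrite leq_mul2l sd leq_addr orbT.
  have h2 : (m * (k * c.-1) <= m * m.-1)%N by apply: leq_mul.
  rewrite -mulnA; apply: leq_trans h1 _.
  rewrite mulnDr mulnA (mulnC k 2) -mulnA mulnCA leq_add2l.
  by rewrite mulnCA.
Qed.
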